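(* Let $v\in\mathbb{N}$ and let $S,S'\subset\mathbb{N}_0$ be finite sets of consecutive integers with $S'>S$ and $d(S,S')=1$. (a) $S$ is down-admissible for $v$ and $S'$ is down-admissible for $v[S]$ if and only if $S'$ is down-admissible for $v$ and $S$ is up-admissible for $v[S']$. In this case $v[S][S']=v[S'](S)$. (b) $S'$ is up-admissible for $v$ and $S$ is up-admissible for $v(S')$ if and only if $S$ is down-admissible for $v$ and $S'$ is up-admissible for $v[S]$. In this case $v(S')(S)=v[S](S')$.
   Context: Fix a prime $p$; $\mathbb{N}=\{1,2,\dots\}$, $\mathbb{N}_0=\mathbb{N}\cup\{0\}$. For $v\in\mathbb{N}$ write $v=\sum_{i=0}^{j}a_ip^i$ with $0\le a_i\le p-1$, $a_j\ne0$, and $a_i=0$ for $i>j$ (the digits of $v$). A finite $S\subset\mathbb{N}_0$ splits uniquely into maximal subsets of consecutive integers (blocks). $S$ is down-admissible for $v$ if (d1) $a_{\min B}\ne0$ for every block $B$ of $S$ and (d2) $s\in S$, $a_{s+1}=0$ imply $s+1\in S$; then $v[S]:=\sum_i\epsilon_ia_ip^i$ with $\epsilon_i=-1$ for $i\in S$ and $\epsilon_i=1$ otherwise. $S$ is up-admissible for $v$ if (u1) $a_{\min B}\ne0$ for every block $B$ of $S$ and (u2) $s\in S$, $a_{s+1}=p-1$ imply $s+1\in S$; then $v(S):=\sum_ka'_kp^k$ with $a'_k=-a_k$ for $k\in S$, $a'_k=a_k+2$ for $k\notin S$, $k-1\in S$, and $a'_k=a_k$ otherwise. Admissibility for $v[S]$,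 $v(S)$ etc. refers to the $p$-adic digits of these numbers. $d(A,B)=\min\{|a-b|:a\in A,b\in B\}$; $S'>S$ means every element of $S'$ exceeds every element of $S$. *)

(* Defs.v *)
From HB Require Import structures.
From mathcomp Require Import all_boot all_order all_algebra.
From mathcomp Require Import finmap.
Set Implicit Arguments. Unset Strict Implicit. Unset Printing Implicit Defensive.
Import Order.TTheory GRing.Theory Num.Theory.
Local Open Scope fset_scope.

(* i-th p-adic digit of an integer w (used for w > 0; for w >= 1 these are
   exactly the digits a_i of the paper, with a_i = 0 beyond the top digit). *)
Definition digit (p : nat) (w : int) (i : nat) : nat :=
  ((absz w %/ p ^ i) %% p)%N.

Definition block_min (S : {fset nat}) (i : nat) : bool :=
  (i \in S) && ((i == 0%N) || (i.-1 \notin S)).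

Definition down_adm (p : nat) (w : int) (S : {fset nat}) : Prop :=
  (forall i, block_min S i -> digit p w i != 0%N) /\
  (forall s, s \in S -> digit p w s.+1 = 0%N -> s.+1 \in S).

Definition up_adm (p : nat) (w : int) (S : {fset nat}) : Prop :=
  (forall i, block_min S i -> digit p w i != 0%N) /\
  (forall s, s \in S -> digit p w s.+1 = p.-1 -> s.+1 \in S).

(* a range of indices large enough to contain every index where the digits
   of w, or the modified digits, can be nonzero *)
Definition bound (w : int) (S : {fset nat}) : nat :=
  (absz w + \max_(i <- S) i + 2)%N.

Local Open Scope ring_scope.

Definition vdown (p : nat) (w : int) (S : {fset nat}) : int :=
  \sum_(i < bound w S)
     (if (i : nat) \in S then -1 else 1) * (digit p w i)%:Z * (p ^ i)%:Z.

Definition updigit (p : nat) (w : int) (S : {fset nat}) (k : nat) : int :=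
  if k \in S then - (digit p w k)%:Z
  else if (0 < k)%N && (k.-1 \in S) then (digit p w k)%:Z + 2
  else (digit p w k)%:Z.

Definition vup (p : nat) (w : int) (S : {fset nat}) : int :=
  \sum_(k < bound w S) updigit p w S k * (p ^ k)%:Z.

Definition consecutive (S : {fset nat}) : Prop :=
  forall i j k, i \in S -> k \in S -> (i <= j <= k)%N -> j \in S.

Definition fset_gt (S' S : {fset nat}) : Prop :=
  forall a b, a \in S -> b \in S' -> (a < b)%N.

Definition dist_one (S S' : {fset nat}) : Prop :=
  (exists a b, [/\ a \in S, b \in S' & `|(a%:Z - b%:Z)| = 1]) /\
  (forall a b, a \in S -> b \in S' -> 1 <= `|(a%:Z - b%:Z)|).

(* Main.v *)
Require Import Defs.
From HB Require Import structures.
From mathcomp Require Import all_boot all_order all_algebra.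
From mathcomp Require Import finmap.
From mathcomp Require Import zify ring.
Import Order.TTheory GRing.Theory Num.Theory.


Section Nat.
Variable p : nat.
Hypothesis hp : (1 < p)%N.
Let p0 : (0 < p)%N. Proof. lia. Qed.
Let pk0 k : (0 < p ^ k)%N. Proof. by rewrite expn_gt0 p0. Qed.

Lemma L_modS w k : w %% p ^ k.+1 = w %% p ^ k + (w %/ p ^ k %% p) * p ^ k.
Proof.
have e1 := divn_eq w (p ^ k).
have e2 := divn_eq (w %/ p ^ k) p.
have hb1 := ltn_pmod w (pk0 k).
have hb2 := ltn_pmod (w %/ p ^ k) p0.
set q := w %/ p ^ k %/ p in e2 *.
set d := w %/ p ^ k %% p in e2 hb2 *.
set r := w %% p ^ k in e1 hb1 *.
have -> : w = q * p ^ k.+1 + (r + d * p ^ k).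
  rewrite {1}e1 e2 expnS. lia.
rewrite modnMDl modn_small //.
rewrite expnS. nia.
Qed.

Lemma digitE3 q d r i : (r < p ^ i)%N -> (d < p)%N ->
  (q * p ^ i.+1 + d * p ^ i + r) %/ p ^ i %% p = d.
Proof.
move=> hr hd.
have -> : q * p ^ i.+1 + d * p ^ i + r = (q * p + d) * p ^ i + r.
  rewrite expnS. lia.
rewrite divnMDl // divn_small // addn0 modnMDl modn_small //.
Qed.

Lemma digit_low q r i k : (i < k)%N ->
  (q * p ^ k + r) %/ p ^ i %% p = r %/ p ^ i %% p.
Proof.
move=> hik.
have -> : q * p ^ k = (q * p ^ (k - i).-1) * p * p ^ i.
  rewrite -!mulnA -expnS -expnD. congr (_ * p ^ _). lia.
by rewrite divnMDl // modnMDl.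
Qed.

Lemma div_high q r k K : (r < p ^ k)%N -> (k <= K)%N ->
  (q * p ^ k + r) %/ p ^ K = q %/ p ^ (K - k).
Proof.
move=> hr hK.
have -> : p ^ K = p ^ k * p ^ (K - k) by rewrite -expnD; congr (_ ^ _); lia.
by rewrite divnMA divnMDl // (divn_small hr) addn0.
Qed.

Lemma digit_high q r k i : (r < p ^ k)%N -> (k <= i)%N ->
  (q * p ^ k + r) %/ p ^ i %% p = q %/ p ^ (i - k) %% p.
Proof. by move=> hr hk; rewrite div_high. Qed.

Lemma mod_low q r k K : (k <= K)%N -> (q * p ^ K + r) %% p ^ k = r %% p ^ k.
Proof.
move=> hK.
have -> : q * p ^ K = (q * p ^ (K - k)) * p ^ k.
  rewrite -mulnA -expnD; congr (_ * p ^ _); lia.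
by rewrite modnMDl.
Qed.

Lemma L_sum w k : (\sum_(i < k) ((w %/ p ^ i %% p) * p ^ i)%:Z = (w %% p ^ k)%:Z)%R.
Proof.
elim: k => [|k IH]; first by rewrite big_ord0 expn0 modn1.
by rewrite big_ord_recr /= IH L_modS PoszD.
Qed.


Lemma bnd x y X Y : x < X -> y < Y -> x * Y + y < X * Y.
Proof. move=> h1 h2. nia. Qed.

Lemma bnd3 U a L Q q P : U < Q -> a < q -> L < P -> U * (P * q) + a * P + L < Q * (P * q).
Proof.
move=> h1 h2 h3; rewrite -addnA; apply: bnd => //.
rewrite [P * q]mulnC; exact: bnd.
Qed.

Lemma KEY v s m c : (s <= m)%N -> (0 < v %/ p ^ s %% p)%N ->
  (1 <= v %/ p ^ m.+1 %% p + c <= p)%N ->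
  exists w : nat,
  [/\ (w%:Z = v%:Z - 2 * ((v %% p ^ m.+1)%:Z - (v %% p ^ s)%:Z) + (c * p ^ m.+1)%:Z)%R,
      (forall k, (k <= s)%N -> w %% p ^ k = v %% p ^ k),
      (forall i, (i < s)%N -> w %/ p ^ i %% p = v %/ p ^ i %% p),
      w %/ p ^ s %% p = p - v %/ p ^ s %% p &
      [/\ w %/ p ^ m.+1 %% p = v %/ p ^ m.+1 %% p + c - 1,
      (forall i, (m.+1 < i)%N -> w %/ p ^ i %% p = v %/ p ^ i %% p),
      (forall K, (m.+1 < K)%N -> w %/ p ^ K = v %/ p ^ K) &
      w %% p ^ m.+1 + v %% p ^ m.+1 = p ^ m.+1 + 2 * (v %% p ^ s)]].
Proof.
move=> hsm ha hc.
set k := m - s.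
have hn : p ^ m.+1 = p ^ k * p ^ s.+1.
  rewrite -expnD; congr (_ ^ _); rewrite /k; lia.
have hs1 : p ^ s.+1 = p ^ s * p by rewrite expnSr.
have hn1 : p ^ m.+2 = p ^ m.+1 * p by rewrite expnSr.
set L := v %% p ^ s.
set a := v %/ p ^ s %% p.
set T := v %/ p ^ s.+1.
set U := T %% p ^ k.
set G := T %/ p ^ k.
have hG : G = v %/ p ^ m.+1 by rewrite /G /T hn mulnC divnMA.
set an := G %% p.
set H := G %/ p.
have hL : L < p ^ s by rewrite ltn_pmod.
have hU : U < p ^ k by rewrite ltn_pmod.
have hav : a < p by rewrite ltn_pmod.
have hanv : an < p by rewrite ltn_pmod.
have ev : v = ((H * p + an) * p ^ k + U) * p ^ s.+1 + a * p ^ s + L.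
  have e1 := divn_eq v (p ^ s.+1).
  have e2 := divn_eq T (p ^ k).
  have e3 := divn_eq G p.
  rewrite L_modS in e1.
  rewrite {1}e1 -/T {1}e2 -/G -/U {1}e3 -/H -/an -/a -/L. ring.
rewrite -hG -/an in hc *.
have [x1 ex1] : exists x1, an + c = x1.+1 by clear -hc; exists (an + c).-1; lia.
have [x2 ex2] : exists x2, p ^ k = U + x2.+1 by clear -hU; exists (p ^ k - U).-1; lia.
have [x3 ex3] : exists x3, p = a + x3 by clear -hav; exists (p - a); lia.
have hx3 : x3 < p by clear -ex3 ha; lia.
have hx2 : x2 < p ^ k by clear -ex2; lia.
set P := p ^ s in hs1 hL ev ex3 *.
set Q := p ^ k in hn ex2 hU hx2 ev *.
set w := ((H * p + x1) * Q + x2) * p ^ s.+1 + x3 * P + L.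
have hvn : v %% p ^ m.+1 = U * p ^ s.+1 + a * P + L.
  rewrite ev hn.
  have -> : ((H * p + an) * Q + U) * p ^ s.+1 + a * P + L =
    (H * p + an) * (Q * p ^ s.+1) + (U * p ^ s.+1 + a * P + L) by ring.
  rewrite modnMDl modn_small //.
  rewrite hs1. exact: bnd3.
have hwn : w %% p ^ m.+1 = x2 * p ^ s.+1 + x3 * P + L.
  rewrite /w hn.
  have -> : ((H * p + x1) * Q + x2) * p ^ s.+1 + x3 * P + L =
    (H * p + x1) * (Q * p ^ s.+1) + (x2 * p ^ s.+1 + x3 * P + L) by ring.
  rewrite modnMDl modn_small //.
  rewrite hs1. exact: bnd3.
have hvs : v %% P = L by rewrite /L.
have hrw : x2 * p ^ s.+1 + x3 * P + L < p ^ m.+1 by rewrite hn hs1; exact: bnd3.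
have hrv : U * p ^ s.+1 + a * P + L < p ^ m.+1 by rewrite hn hs1; exact: bnd3.
have ewh : w = H * p ^ m.+2 + ((an + c - 1) * p ^ m.+1 + (x2 * p ^ s.+1 + x3 * P + L)).
  rewrite hn1 hn /w. have -> : an + c - 1 = x1 by clear -ex1; lia. ring.
have evh : v = H * p ^ m.+2 + (an * p ^ m.+1 + (U * p ^ s.+1 + a * P + L)).
  rewrite hn1 hn ev. ring.
have hrw2 : (an + c - 1) * p ^ m.+1 + (x2 * p ^ s.+1 + x3 * P + L) < p ^ m.+2.
  rewrite hn1 [_ * p]mulnC; apply: bnd => //; clear -hc; lia.
have hrv2 : an * p ^ m.+1 + (U * p ^ s.+1 + a * P + L) < p ^ m.+2.
  rewrite hn1 [_ * p]mulnC; exact: bnd.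
exists w; split.
- have E : w + 2 * (U * p ^ s.+1 + a * P) = v + c * p ^ m.+1.
    have e1 : x1 * (Q * (P * p)) + Q * (P * p) = an * (Q * (P * p)) + c * (Q * (P * p)).
      by rewrite addnC -mulSn -ex1 mulnDl.
    have e3 : x3 * P + a * P = p * P by rewrite -mulnDl addnC -ex3.
    have e2 : x2 * (P * p) + U * (P * p) + P * p = Q * (P * p).
      by rewrite ex2 -addn1 !mulnDl mul1n; ring.
    rewrite /w ev hn hs1.
    clearbody w L a an U H P Q. clear -e1 e2 e3. nia.
  rewrite hvn. clearbody w L a an U H P Q G T k. clear -E. lia.
- move=> k0 hk0.
  rewrite (_ : w = ((H * p + x1) * Q + x2) * p * p ^ s + (x3 * P + L)); last first.
    by rewrite /w hs1 -/P; ring.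
  rewrite ev (_ : ((H * p + an) * Q + U) * p ^ s.+1 + a * P + L
      = ((H * p + an) * Q + U) * p * p ^ s + (a * P + L)); last first.
    by rewrite hs1 -/P; ring.
  by rewrite !mod_low // /P; rewrite -!(modn_dvdm _ (dvdn_exp2l p hk0)).
- move=> i hi.
  rewrite (_ : w = (((H * p + x1) * Q + x2) * p + x3) * p ^ s + L); last first.
    by rewrite /w hs1 -/P; ring.
  rewrite ev (_ : ((H * p + an) * Q + U) * p ^ s.+1 + a * P + L
      = (((H * p + an) * Q + U) * p + a) * p ^ s + L); last first.
    by rewrite hs1 -/P; ring.
  by rewrite !digit_low.
- rewrite (_ : w = ((H * p + x1) * Q + x2) * p ^ s.+1 + x3 * p ^ s + L) //.
  rewrite digitE3 //; clear -ex3; lia.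
split.
- rewrite ewh (_ : H * p ^ m.+2 + _ = H * p ^ m.+2 + (an + c - 1) * p ^ m.+1 + (x2 * p ^ s.+1 + x3 * P + L)); last by ring.
  rewrite digitE3 //; clear -hc; lia.
- move=> i hi. rewrite ewh evh !digit_high //.
- move=> K hK. rewrite ewh evh !div_high //.
- rewrite hwn hvn hn ex2 hs1 ex3. ring.
Qed.


Lemma digitP w i : digit p w%:Z i = w %/ p ^ i %% p.
Proof. by []. Qed.

Local Open Scope ring_scope.

Lemma sum_lt w n N : (n <= N)%N ->
  \sum_(i < N) (if (i < n)%N then (w %/ p ^ i %% p)%:Z * (p ^ i)%:Z else 0) = (w %% p ^ n)%:Z.
Proof.
move=> hn; rewrite -big_mkcond /= -(big_ord_widen N (fun i => (w %/ p ^ i %% p)%:Z * (p ^ i)%:Z) hn).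
rewrite -L_sum; apply: eq_bigr => i _; by rewrite PoszM.
Qed.

Section Block.
Variables (S : {fset nat}) (s m : nat).
Hypothesis hS : forall i, (i \in S) = (s <= i <= m)%N.
Hypothesis hsm : (s <= m)%N.

Lemma adm_down w : down_adm p w%:Z S <->
  (digit p w%:Z s != 0%N /\ digit p w%:Z m.+1 != 0%N).
Proof.
rewrite /down_adm /block_min; split.
- case=> h1 h2; split.
    apply: h1; rewrite !hS leqnn hsm /=.
    by case: (s) => [|s'] //=; rewrite ltnn.
  apply/negP => /eqP h0. have := h2 m. rewrite !hS h0 leqnn hsm => /(_ isT erefl).
  by rewrite ltnn andbF.
- case=> d1 d2; split.
    move=> i; rewrite !hS => H.
    have -> : i = s by clear -H hsm; lia.
    exact: d1.
  move=> s0; rewrite !hS => hs0 hd.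
  case: (ltnP s0 m) => h; first by clear -h hs0; lia.
  have e : s0 = m by clear -h hs0; lia.
  by rewrite e in hd; rewrite hd in d2.
Qed.

Lemma adm_up w : up_adm p w%:Z S <->
  (digit p w%:Z s != 0%N /\ digit p w%:Z m.+1 != p.-1).
Proof.
rewrite /up_adm /block_min; split.
- case=> h1 h2; split.
    apply: h1; rewrite !hS leqnn hsm /=.
    by case: (s) => [|s'] //=; rewrite ltnn.
  apply/negP => /eqP h0. have := h2 m. rewrite !hS h0 leqnn hsm => /(_ isT erefl).
  by rewrite ltnn andbF.
- case=> d1 d2; split.
    move=> i; rewrite !hS => H.
    have -> : i = s by clear -H hsm; lia.
    exact: d1.
  move=> s0; rewrite !hS => hs0 hd.
  case: (ltnP s0 m) => h; first by clear -h hs0; lia.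
  have e : s0 = m by clear -h hs0; lia.
  by rewrite e in hd; rewrite hd eqxx in d2.
Qed.

Lemma bound_ok w : (m.+1 < bound w%:Z S)%N /\ (w < p ^ bound w%:Z S)%N.
Proof.
have hm : (m <= \max_(i <- S) i)%N.
  have := @leq_bigmax_seq nat (enum_fset S) xpredT (fun i => i) m.
  apply => //. by rewrite hS leqnn hsm.
rewrite /bound absz_nat; split; first by clear -hm; lia.
apply: leq_trans (ltn_expl _ hp). lia.
Qed.

Lemma vdown_block w : vdown p w%:Z S = w%:Z - 2 * ((w %% p ^ m.+1)%:Z - (w %% p ^ s)%:Z).
Proof.
have [hmN hwN] := bound_ok w.
rewrite /vdown.
set N := bound _ _ in hmN hwN *.
have hsN : (s <= N)%N by clear -hmN hsm; lia.
have hmN' : (m.+1 <= N)%N by exact: ltnW.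
set F := fun i : nat => (w %/ p ^ i %% p)%:Z * (p ^ i)%:Z.
transitivity (\sum_(i < N) (F i - 2 * ((if (i < m.+1)%N then F i else 0) - (if (i < s)%N then F i else 0)))).
  apply: eq_bigr => i _; rewrite hS digitP /F ltnS.
  case: (leqP s i) => h1; case: (leqP i m) => h2 /=; try ring.
  clear -h1 h2 hsm; lia.
rewrite sumrB -mulr_sumr sumrB !sum_lt //.
have := @sum_lt w N N (leqnn N); rewrite modn_small // => <-.
congr (_ - _); apply: eq_bigr => i _; by rewrite ltn_ord.
Qed.

Lemma vup_block w : vup p w%:Z S =
  w%:Z - 2 * ((w %% p ^ m.+1)%:Z - (w %% p ^ s)%:Z) + 2 * (p ^ m.+1)%:Z.
Proof.
have [hmN hwN] := bound_ok w.
rewrite /vup.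
set N := bound _ _ in hmN hwN *.
have hsN : (s <= N)%N by clear -hmN hsm; lia.
have hmN' : (m.+1 <= N)%N by exact: ltnW.
set F := fun i : nat => (w %/ p ^ i %% p)%:Z * (p ^ i)%:Z.
transitivity (\sum_(i < N) (F i - 2 * ((if (i < m.+1)%N then F i else 0) - (if (i < s)%N then F i else 0))
   + (if (i : nat) == m.+1 :> nat then 2 * (p ^ i)%:Z else 0))).
  apply: eq_bigr => i _; rewrite /updigit !hS digitP /F ltnS.
  case: (leqP s i) => h1; case: (leqP i m) => h2 /=.
  - have -> : ((i : nat) == m.+1) = false by apply/negbTE; clear -h2; lia.
    ring.
  - have [e|ne] := eqVneq (i : nat) m.+1.
      rewrite e /= hsm leqnn /=. ring.
    have -> : ((0 < i)%N && (s <= i.-1 <= m)%N) = false by clear -ne h1 h2; lia.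
    ring.
  - have -> : ((i : nat) == m.+1) = false by apply/negbTE; clear -h2 h1 hsm; lia.
    have -> : ((0 < i)%N && (s <= i.-1 <= m)%N) = false by clear -h1; lia.
    ring.
  - clear -h1 h2 hsm; lia.
rewrite big_split /= sumrB -mulr_sumr sumrB !sum_lt //.
rewrite -(big_mkcond (fun i : 'I_N => (i : nat) == m.+1) (fun i : 'I_N => 2 * (p ^ i)%:Z)) (big_ord1_eq _ (fun i : nat => 2 * (p ^ i)%:Z) m.+1 N) hmN.
have := @sum_lt w N N (leqnn N); rewrite modn_small // => <-.
congr (_ - _ + _); apply: eq_bigr => i _; by rewrite ltn_ord.
Qed.

End Block.

End Nat.

Local Open Scope fset_scope.
Local Open Scope ring_scope.

Theorem lemma2p13 (p : nat) (v : nat) (S S' : {fset nat}) :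
  prime p -> (1 <= v)%N ->
  consecutive S -> consecutive S' -> fset_gt S' S -> dist_one S S' ->
  (* (a) *)
  ((down_adm p v%:Z S /\ down_adm p (vdown p v%:Z S) S') <->
   (down_adm p v%:Z S' /\ up_adm p (vdown p v%:Z S') S)) /\
  (down_adm p v%:Z S /\ down_adm p (vdown p v%:Z S) S' ->
   vdown p (vdown p v%:Z S) S' = vup p (vdown p v%:Z S') S) /\
  (* (b) *)
  ((up_adm p v%:Z S' /\ up_adm p (vup p v%:Z S') S) <->
   (down_adm p v%:Z S /\ up_adm p (vdown p v%:Z S) S')) /\
  (up_adm p v%:Z S' /\ up_adm p (vup p v%:Z S') S ->
   vup p (vup p v%:Z S') S = vup p (vdown p v%:Z S) S').
Proof.
move=> hpr hv hcS hcS' hgt [[a [b [ha hb hab]]] hd1].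
have hp : (1 < p)%N := prime_gt1 hpr.
have eb : b = a.+1 by have := hgt a b ha hb; clear -hab; lia.
subst b.
have exS : exists i, (fun i => i \in S) i by exists a.
case: (ex_minnP exS) => s hsS hsmin.
have exS' : exists i, (fun i => i \in S') i by exists a.+1.
have ubS' : forall i, (fun i => i \in S') i -> (i <= \max_(j <- S') j)%N.
  move=> i hi. exact: (@leq_bigmax_seq nat (enum_fset S') xpredT (fun i => i) i).
case: (ex_maxnP exS' ubS') => M hMS hMmax.
have hsa : (s <= a)%N by exact: hsmin.
have haM : (a.+1 <= M)%N by exact: hMmax.
have hS : forall i, (i \in S) = (s <= i <= a)%N.
  move=> i; apply/idP/idP.
    move=> hi; rewrite hsmin //=. by have := hgt i a.+1 hi hb.
  move=> hi; exact: (hcS s i a hsS ha hi).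
have hS' : forall i, (i \in S') = (a.+1 <= i <= M)%N.
  move=> i; apply/idP/idP.
    move=> hi; rewrite hMmax // andbT. exact: hgt a i ha hi.
  move=> hi; exact: (hcS' a.+1 i M hb hMS hi).
have hpn := prime_gt0 hpr.
set A := digit p v%:Z s.
set B := digit p v%:Z a.+1.
set C := digit p v%:Z M.+1.
have hA : (A < p)%N by rewrite /A digitP ltn_pmod.
have hB : (B < p)%N by rewrite /B digitP ltn_pmod.
have hC : (C < p)%N by rewrite /C digitP ltn_pmod.
have F1 : A != 0%N -> B != 0%N -> exists w1 : nat,
   [/\ vdown p v%:Z S = w1%:Z, digit p w1%:Z a.+1 = (B - 1)%N, digit p w1%:Z M.+1 = C,
       (w1 %% p ^ M.+1 + v = v %% p ^ M.+1 + w1)%N &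
       [/\ (w1 %% p ^ a.+1 + v %% p ^ a.+1 = p ^ a.+1 + 2 * (v %% p ^ s))%N &
       w1%:Z = v%:Z - 2 * ((v %% p ^ a.+1)%:Z - (v %% p ^ s)%:Z)]].
  move=> nA nB.
  have [w [W0 W1 W1' W2 [W3 W4 W5 W6]]] := @KEY p hp v s a 0 hsa
     ltac:(by rewrite lt0n) ltac:(by rewrite addn0 lt0n nB; exact: ltnW).
  rewrite mul0n addr0 in W0.
  exists w; split.
  - by rewrite (@vdown_block p hp S s a hS hsa) -W0.
  - by rewrite digitP W3 addn0.
  - by rewrite digitP W4.
  - have e1 := divn_eq w (p ^ M.+1). have e2 := divn_eq v (p ^ M.+1).
    rewrite W5 // in e1. clear -e1 e2. lia.
  - by split.
have F2 : B != 0%N -> C != 0%N -> exists w2 : nat,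
   [/\ vdown p v%:Z S' = w2%:Z, digit p w2%:Z s = A, digit p w2%:Z a.+1 = (p - B)%N,
       (w2 %% p ^ a.+1 = v %% p ^ a.+1)%N &
       [/\ (w2 %% p ^ s = v %% p ^ s)%N &
       w2%:Z = v%:Z - 2 * ((v %% p ^ M.+1)%:Z - (v %% p ^ a.+1)%:Z)]].
  move=> nB nC.
  have [w [W0 W1 W1' W2 [W3 W4 W5 W6]]] := @KEY p hp v a.+1 M 0 haM
     ltac:(by rewrite lt0n) ltac:(by rewrite addn0 lt0n nC; exact: ltnW).
  rewrite mul0n addr0 in W0.
  exists w; split.
  - by rewrite (@vdown_block p hp S' a.+1 M hS' haM) -W0.
  - by rewrite digitP W1'.
  - by rewrite digitP W2.
  - by rewrite W1.
  - split => //. by rewrite W1 //; apply: ltnW.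
have F3 : B != 0%N -> C != p.-1 -> exists w3 : nat,
   [/\ vup p v%:Z S' = w3%:Z, digit p w3%:Z s = A, digit p w3%:Z a.+1 = (p - B)%N,
       (w3 %% p ^ a.+1 = v %% p ^ a.+1)%N &
       [/\ (w3 %% p ^ s = v %% p ^ s)%N &
       w3%:Z = v%:Z - 2 * ((v %% p ^ M.+1)%:Z - (v %% p ^ a.+1)%:Z) + 2 * (p ^ M.+1)%:Z]].
  move=> nB nC.
  have hC2 : (1 <= digit p v%:Z M.+1 + 2 <= p)%N by rewrite -/C; clear -hC nC; lia.
  have [w [W0 W1 W1' W2 [W3 W4 W5 W6]]] := @KEY p hp v a.+1 M 2 haM
     ltac:(by rewrite lt0n) hC2.
  rewrite PoszM in W0.
  exists w; split.
  - by rewrite (@vup_block p hp S' a.+1 M hS' haM) W0.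
  - by rewrite digitP W1'.
  - by rewrite digitP W2.
  - by rewrite W1.
  - split => //. by rewrite W1 //; apply: ltnW.

have hAdS w : down_adm p w%:Z S <-> (digit p w%:Z s != 0%N /\ digit p w%:Z a.+1 != 0%N)
  := @adm_down p S s a hS hsa w.
have hUpS w : up_adm p w%:Z S <-> (digit p w%:Z s != 0%N /\ digit p w%:Z a.+1 != p.-1)
  := @adm_up p S s a hS hsa w.
have hAdS' w : down_adm p w%:Z S' <-> (digit p w%:Z a.+1 != 0%N /\ digit p w%:Z M.+1 != 0%N)
  := @adm_down p S' a.+1 M hS' haM w.
have hUpS' w : up_adm p w%:Z S' <-> (digit p w%:Z a.+1 != 0%N /\ digit p w%:Z M.+1 != p.-1)
  := @adm_up p S' a.+1 M hS' haM w.
split; [|split; [|split]].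
- split.
  + case=> /hAdS [nA nB] H2.
    have [w1 [E1 D1n D1M R1 [R1b R1c]]] := F1 nA nB.
    rewrite E1 in H2; move/hAdS': H2 => [x1 x2]; rewrite D1n in x1; rewrite D1M in x2.
    have [w2 [E2 D2s D2n Q1 [Q2 Q3]]] := F2 nB x2.
    split; first by apply/hAdS'.
    rewrite E2; apply/hUpS; rewrite D2s D2n; split => //.
    clear -x1 nB hB; lia.
  + case=> /hAdS' [nB nC] H2.
    have [w2 [E2 D2s D2n Q1 [Q2 Q3]]] := F2 nB nC.
    rewrite E2 in H2; move/hUpS: H2 => [x1 x2]; rewrite D2s in x1; rewrite D2n in x2.
    have [w1 [E1 D1n D1M R1 [R1b R1c]]] := F1 x1 nB.
    split; first by apply/hAdS.
    rewrite E1; apply/hAdS'; rewrite D1n D1M; split => //.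
    clear -x2 nB hB; lia.
- case=> /hAdS [nA nB] H2.
  have [w1 [E1 D1n D1M R1 [R1b R1c]]] := F1 nA nB.
  rewrite E1 in H2 *; move/hAdS': H2 => [x1 x2]; rewrite D1n in x1; rewrite D1M in x2.
  have [w2 [E2 D2s D2n Q1 [Q2 Q3]]] := F2 nB x2.
  rewrite E2 (@vdown_block p hp S' a.+1 M hS' haM) (@vup_block p hp S s a hS hsa) Q1 Q2.
  move: R1 R1b R1c Q3.
  generalize (w1 %% p ^ M.+1)%N (w1 %% p ^ a.+1)%N (v %% p ^ M.+1)%N (v %% p ^ a.+1)%N
    (v %% p ^ s)%N (p ^ a.+1)%N (p ^ M.+1)%N => X1 X2 vM vn vs P PM.
  clear -X1 X2 vM vn vs P PM w1 w2 v. lia.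
- split.
  + case=> /hUpS' [nB nC] H2.
    have [w3 [E3 D3s D3n Q1 [Q2 Q3]]] := F3 nB nC.
    rewrite E3 in H2; move/hUpS: H2 => [x1 x2]; rewrite D3s in x1; rewrite D3n in x2.
    have [w1 [E1 D1n D1M R1 [R1b R1c]]] := F1 x1 nB.
    split; first by apply/hAdS.
    rewrite E1; apply/hUpS'; rewrite D1n D1M; split => //.
    clear -x2 nB hB; lia.
  + case=> /hAdS [nA nB] H2.
    have [w1 [E1 D1n D1M R1 [R1b R1c]]] := F1 nA nB.
    rewrite E1 in H2; move/hUpS': H2 => [x1 x2]; rewrite D1n in x1; rewrite D1M in x2.
    have [w3 [E3 D3s D3n Q1 [Q2 Q3]]] := F3 nB x2.
    split; first by apply/hUpS'.
    rewrite E3; apply/hUpS; rewrite D3s D3n; split => //.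
    clear -x1 nB hB; lia.
- case=> /hUpS' [nB nC] H2.
  have [w3 [E3 D3s D3n Q1 [Q2 Q3]]] := F3 nB nC.
  rewrite E3 in H2 *; move/hUpS: H2 => [x1 x2]; rewrite D3s in x1; rewrite D3n in x2.
  have [w1 [E1 D1n D1M R1 [R1b R1c]]] := F1 x1 nB.
  rewrite E1 (@vup_block p hp S' a.+1 M hS' haM) (@vup_block p hp S s a hS hsa) Q1 Q2.
  move: R1 R1b R1c Q3.
  generalize (w1 %% p ^ M.+1)%N (w1 %% p ^ a.+1)%N (v %% p ^ M.+1)%N (v %% p ^ a.+1)%N
    (v %% p ^ s)%N (p ^ a.+1)%N (p ^ M.+1)%N => X1 X2 vM vn vs P PM.
  clear -X1 X2 vM vn vs P PM w1 w3 v. lia.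
Qed.
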